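(* Let $P$ be a finite poset and $\Sigma\colon P\to\mathbf{SimpComp}$ a functor, with colimit $K$ (a finite simplicial complex) and canonical injective simplicial maps $i_p\colon\Sigma_p\hookrightarrow K$ inducing order embeddings $\iota_p\colon F(\Sigma_p)\hookrightarrow F(K)$. If $\sigma\le\tau$ in $F(K)$, then there exists $p\in P$ with $\tau\in\iota_p(F(\Sigma_p))$, and for this $p$ the whole interval $[\sigma,\tau]=\{x\in F(K):\sigma\le x\le\tau\}$ is contained in $\iota_p(F(\Sigma_p))$.
   Context: $\mathbf{SimpComp}$ is the category of finite simplicial complexes and injective simplicial maps; $\Sigma_p=\Sigma(p)$. The colimit $K$ is formed by gluing the $\Sigma_p$ along the diagram maps: its vertex set is $\bigsqcup_p V(\Sigma_p)$ modulo the equivalence relation generated by $x\sim\Sigma(p\le q)(x)$, and its simplices are the classes of simplices of the $\Sigma_p$. For a simplicial complex $X$, $F(X)$ denotes its face poset: the set of simplices ordered by inclusion. *)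

(* Defs.v *)
From mathcomp Require Import all_boot all_order.
Unset Printing Implicit Defensive.
Import Order.TTheory.
Local Open Scope order_scope.

Definition is_simpcomp (V : finType) (S : {set {set V}}) : Prop :=
  [/\ forall s, s \in S -> s != set0,
      forall s t : {set V}, s \in S -> t \subset s -> t != set0 -> t \in S &
      forall v, [set v] \in S].

Definition inj_simp_map (V1 V2 : finType) (S1 : {set {set V1}}) (S2 : {set {set V2}})
  (f : V1 -> V2) : Prop :=
  injective f /\ forall s, s \in S1 -> f @: s \in S2.

(* A functor Sigma : P -> SimpComp (P a finite poset), given by vertex types V p,
   complexes S p, and maps f p q : V p -> V q (meaningful for p <= q). *)
Definition is_simp_functor (d : Order.disp_t) (P : finPOrderType d)
  (V : P -> finType) (S : forall p, {set {set V p}})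
  (f : forall p q : P, V p -> V q) : Prop :=
  [/\ forall p, is_simpcomp _ (S p),
      forall p q, p <= q -> inj_simp_map _ _ (S p) (S q) (f p q),
      forall p (v : V p), f p p v = v &
      forall p q r (v : V p), p <= q -> q <= r -> f p r v = f q r (f p q v)].

Section Colim.
Variables (d : Order.disp_t) (P : finPOrderType d) (V : P -> finType)
  (S : forall p, {set {set V p}}) (f : forall p q : P, V p -> V q).

Definition dunion := {p : P & V p}.

Definition glue_step (x y : dunion) : bool :=
  (tag x <= tag y) && (@f (tag x) (tag y) (tagged x) == tagged y).

Definition glue_sym (x y : dunion) : bool := glue_step x y || glue_step y x.

(* vertices of the colimit K: equivalence classes for the equivalence relation
   generated by glue_step (reflexive-transitive closure of its symmetrization) *)
Definition colim_class (x : dunion) : {set dunion} :=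
  [set y | connect glue_sym x y].

Definition colim_inj (p : P) (v : V p) : {set dunion} :=
  colim_class (Tagged V v).

Definition face_image (p : P) : {set {set {set dunion}}} :=
  [set colim_inj p @: s | s : {set V p} in S p].

(* F(K): the simplices of K are the classes of simplices of the Sigma_p *)
Definition colim_faces : {set {set {set dunion}}} :=
  \bigcup_(p : P) face_image p.

End Colim.
Arguments is_simp_functor {d P V} S f.
Arguments dunion {d P} V.
Arguments colim_inj {d P V} f p v.
Arguments face_image {d P V} S f p.
Arguments colim_faces {d P V} S f.

(* Main.v *)
Require Import Defs.
From mathcomp Require Import all_boot all_order.
Import Order.TTheory.
Local Open Scope order_scope.

Theorem lemma5p12 (d : Order.disp_t) (P : finPOrderType d) (V : P -> finType)
  (S : forall p, {set {set V p}}) (f : forall p q : P, V p -> V q)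
  (HSigma : is_simp_functor S f)
  (Hinj : forall p : P, injective (colim_inj f p))
  (sigma tau : {set {set dunion V}}) :
  sigma \in colim_faces S f -> tau \in colim_faces S f -> (sigma \subset tau)%B ->
  (exists p : P, tau \in face_image S f p) /\
  (forall p : P, tau \in face_image S f p ->
     forall x, x \in colim_faces S f -> (sigma \subset x)%B -> (x \subset tau)%B ->
       x \in face_image S f p).
Proof.
move=> _ /bigcupP[p0 _ Htau0] _; split; first by exists p0.
case: HSigma => Hc _ _ _.
move=> p /imsetP[s sS ->] x /bigcupP[q _ /imsetP[u uS ->]] _ xsub.
set g := colim_inj f p.
set X := colim_inj f q @: u.
set t := s :&: g @^-1: X.
have gt : g @: t = X.
  apply/setP => y; apply/imsetP/idP.
  - by case=> z; rewrite inE => /andP[_]; rewrite inE => zX ->.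
  - move=> yX; have := subsetP xsub y yX; case/imsetP => z zs yz.
    exists z => //; rewrite inE zs inE; rewrite /g -yz; exact: yX.
have Xn0 : X != set0.
  rewrite /X; apply/negP => /eqP/eqP; rewrite imset_eq0 => /eqP u0.
  case: (Hc q) => H0 _ _; by move: (H0 u uS); rewrite u0 eqxx.
apply/imsetP; exists t; last by rewrite gt.
case: (Hc p) => _ H1 _; apply: (H1 s) => //; first exact: subsetIl.
apply/negP => /eqP t0; move: Xn0; by rewrite -gt t0 imset0 eqxx.
Qed.
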